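(* Let $\Theta\vdash t$ be an $\mathsf{F_{<:}^\top}$ term-in-context which is $\beta$-normal and is not a $\lambda$- or $\Lambda$-abstraction. If $\Theta\vdash_M t:T$, then $T$ is an $\mathsf{F_{<:}^\top}$ type (i.e. $\Theta\vdash^\top T$).
   Context: System $\mathsf{F_{<:}^{K\top}}$: raw types $T ::= \top \mid X \mid T\to T \mid \forall^{\mathsf K}(X<:T).T \mid \forall^\top(X<:T).T$, up to $\alpha$-conversion. Contexts $\Theta$: finite sequences of $X<:T$ or $x:T$ with distinct variables, each type well-formed over the preceding part. Subtyping $\Theta\vdash S<:T$: (Var) $\Theta,X<:T,\Theta'\vdash X<:T$; (Top) $T<:\top$; (Refl); (Trans); ($\to$) from $S'<:S$, $T<:T'$ infer $S\to T<:S'\to T'$; ($\forall$-Fun) from $\Theta,X<:S\vdash T<:T'$ infer $\forall^{\mathsf K}(X<:S).T<:\forall^{\mathsf K}(X<:S).T'$; ($\forall$-Loc) from $\Theta\vdash T_0<:S_0$, $\Theta,X<:S_0\vdash S_1<:T_1$ infer $\forall^{\mathsf K}(X<:S_0).S_1<:\forall^\top(X<:T_0).T_1$; ($\forall$-Top) from $\Theta\vdash T_0<:S_0$, $\Theta,X<:\top\vdash S_1<:T_1$ infer $\forall^\top(X<:S_0).S_1<:\forall^\top(X<:T_0).T_1$. Raw terms $t ::= \mathsf{top}\mid x\mid\lambda(x:T).t\mid\Lambda(X<:T).t\mid t\,t\mid t\{T\}$. $\Theta^*(T)=\Theta^*(S)$ if $T\equiv X$ and $X<:S$ occurs in $\Theta$;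 $\Theta^*(T)=T$ otherwise. Minimal typing $\Theta\vdash_M t:T$: $\Theta,x:T,\Theta'\vdash_M x:T$; $\Theta\vdash_M\mathsf{top}:\top$; from $\Theta,x:S\vdash_M t:T$ infer $\Theta\vdash_M\lambda(x:S).t:S\to T$; from $\Theta\vdash_M r:R$, $\Theta\vdash_M s:S$, $\Theta\vdash S<:S'$ with $\Theta^*(R)=S'\to T$ infer $\Theta\vdash_M r\,s:T$; from $\Theta,X<:S\vdash_M t:T$ infer $\Theta\vdash_M\Lambda(X<:S).t:\forall^{\mathsf K}(X<:S).T$; from $\Theta\vdash_M r:R$, $\Theta\vdash S<:S'$ with $\Theta^*(R)=\forall^{\mathsf K}(X<:S').T$ or $\forall^\top(X<:S').T$ infer $\Theta\vdash_M r\{S\}:T[S/X]$. An $\mathsf{F_{<:}^\top}$ type is one containing only $\forall^\top$ quantifiers; an $\mathsf{F_{<:}^\top}$ term-in-context $\Theta\vdash^\top t$ is one whose context and type annotations contain only $\mathsf{F_{<:}^\top}$ types. A term is $\beta$-normal if it has no subterm of the form $(\lambda(x:S).t)\,s$ or $(\Lambda(X<:S).t)\{R\}$. *)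

(* Defs.v *)
(* System F<:^{K,T} in de Bruijn representation (alpha-conversion
   is built in). Type variables and term variables use two separate de Bruijn
   index spaces: a type variable index counts only the type bindings X<:T of the
   context, a term variable index counts only the term bindings x:T.
   Contexts are lists whose HEAD is the most recent (rightmost) binding. *)
From Stdlib Require Import List Arith.
Import ListNotations.

Inductive ty : Type :=
| TTop : ty
| TVar : nat -> ty
| TArr : ty -> ty -> ty
| TAllK : ty -> ty -> ty   (* forall^K (X <: S). T ; T binds index 0 *)
| TAllT : ty -> ty -> ty.  (* forall^T (X <: S). T ; T binds index 0 *)

Inductive tm : Type :=
| ttop : tm
| tvar : nat -> tm
| tabs : ty -> tm -> tm
| ttabs : ty -> tm -> tm
| tapp : tm -> tm -> tm
| ttapp : tm -> ty -> tm.

Inductive bind : Type :=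
| BTy : ty -> bind   (* X <: T *)
| BTm : ty -> bind.

Definition ctx := list bind.

Fixpoint tshift (d c : nat) (T : ty) : ty :=
  match T with
  | TTop => TTop
  | TVar n => if c <=? n then TVar (n + d) else TVar n
  | TArr A B => TArr (tshift d c A) (tshift d c B)
  | TAllK A B => TAllK (tshift d c A) (tshift d (S c) B)
  | TAllT A B => TAllT (tshift d c A) (tshift d (S c) B)
  end.

Fixpoint tsubst (j : nat) (S : ty) (T : ty) : ty :=
  match T with
  | TTop => TTop
  | TVar n =>
      if n =? j then tshift j 0 S
      else if j <? n then TVar (pred n) else TVar n
  | TArr A B => TArr (tsubst j S A) (tsubst j S B)
  | TAllK A B => TAllK (tsubst j S A) (tsubst (Datatypes.S j) S B)
  | TAllT A B => TAllT (tsubst j S A) (tsubst (Datatypes.S j) S B)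
  end.

Definition topen (T S : ty) : ty := tsubst 0 S T.

Fixpoint ntys (G : ctx) : nat :=
  match G with
  | [] => 0
  | BTy _ :: G' => Datatypes.S (ntys G')
  | BTm _ :: G' => ntys G'
  end.

(* bound of type variable n, expressed in the scope of the whole context *)
Fixpoint get_tbound (G : ctx) (n : nat) : option ty :=
  match G with
  | [] => None
  | BTy T :: G' =>
      match n with
      | 0 => Some (tshift 1 0 T)
      | Datatypes.S n' => option_map (tshift 1 0) (get_tbound G' n')
      end
  | BTm _ :: G' => get_tbound G' n
  end.

(* type of term variable x, expressed in the scope of the whole context *)
Fixpoint get_var (G : ctx) (x : nat) : option ty :=
  match G with
  | [] => None
  | BTm T :: G' =>
      match x with
      | 0 => Some T
      | Datatypes.S x' => get_var G' x'
      end
  | BTy _ :: G' => option_map (tshift 1 0) (get_var G' x)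
  end.

(* Theta^*(T): Theta^*(X) = Theta^*(S) if X <: S in Theta, Theta^*(T) = T otherwise *)
Fixpoint expose (G : ctx) (T : ty) {struct G} : ty :=
  match T with
  | TVar n =>
      match G with
      | [] => T
      | BTy B :: G' =>
          match n with
          | 0 => tshift 1 0 (expose G' B)
          | Datatypes.S n' => tshift 1 0 (expose G' (TVar n'))
          end
      | BTm _ :: G' => expose G' T
      end
  | _ => T
  end.

Fixpoint wf_ty (k : nat) (T : ty) : Prop :=
  match T with
  | TTop => True
  | TVar n => n < k
  | TArr A B => wf_ty k A /\ wf_ty k B
  | TAllK A B => wf_ty k A /\ wf_ty (Datatypes.S k) B
  | TAllT A B => wf_ty k A /\ wf_ty (Datatypes.S k) B
  end.

Fixpoint wf_ctx (G : ctx) : Prop :=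
  match G with
  | [] => True
  | BTy T :: G' => wf_ty (ntys G') T /\ wf_ctx G'
  | BTm T :: G' => wf_ty (ntys G') T /\ wf_ctx G'
  end.

Fixpoint nvars (G : ctx) : nat :=
  match G with
  | [] => 0
  | BTm _ :: G' => Datatypes.S (nvars G')
  | BTy _ :: G' => nvars G'
  end.

Fixpoint wf_tm (k m : nat) (t : tm) : Prop :=
  match t with
  | ttop => True
  | tvar x => x < m
  | tabs U u => wf_ty k U /\ wf_tm k (Datatypes.S m) u
  | ttabs U u => wf_ty k U /\ wf_tm (Datatypes.S k) m u
  | tapp r s => wf_tm k m r /\ wf_tm k m s
  | ttapp r U => wf_tm k m r /\ wf_ty k U
  end.

Inductive sub : ctx -> ty -> ty -> Prop :=
| S_Var : forall G n T, get_tbound G n = Some T -> sub G (TVar n) T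
| S_Top : forall G T, sub G T TTop
| S_Refl : forall G T, sub G T T
| S_Trans : forall G A U T, sub G A U -> sub G U T -> sub G A T
| S_Arr : forall G U U' T T',
    sub G U' U -> sub G T T' -> sub G (TArr U T) (TArr U' T')
| S_AllFun : forall G U T T',
    sub (BTy U :: G) T T' -> sub G (TAllK U T) (TAllK U T')
| S_AllLoc : forall G S0 S1 T0 T1,
    sub G T0 S0 -> sub (BTy S0 :: G) S1 T1 ->
    sub G (TAllK S0 S1) (TAllT T0 T1)
| S_AllTop : forall G S0 S1 T0 T1,
    sub G T0 S0 -> sub (BTy TTop :: G) S1 T1 ->
    sub G (TAllT S0 S1) (TAllT T0 T1).

Inductive mtype : ctx -> tm -> ty -> Prop :=
| M_Var : forall G x T, get_var G x = Some T -> mtype G (tvar x) T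
| M_Top : forall G, mtype G ttop TTop
| M_Abs : forall G U t T,
    mtype (BTm U :: G) t T -> mtype G (tabs U t) (TArr U T)
| M_App : forall G r s R U U' T,
    mtype G r R -> mtype G s U -> sub G U U' ->
    expose G R = TArr U' T -> mtype G (tapp r s) T
| M_TAbs : forall G U t T,
    mtype (BTy U :: G) t T -> mtype G (ttabs U t) (TAllK U T)
| M_TAppK : forall G r R U U' T,
    mtype G r R -> sub G U U' -> expose G R = TAllK U' T ->
    mtype G (ttapp r U) (topen T U)
| M_TAppT : forall G r R U U' T,
    mtype G r R -> sub G U U' -> expose G R = TAllT U' T ->
    mtype G (ttapp r U) (topen T U).

Fixpoint is_top_ty (T : ty) : Prop :=
  match T with
  | TTop => True
  | TVar _ => True
  | TArr A B => is_top_ty A /\ is_top_ty B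
  | TAllK _ _ => False
  | TAllT A B => is_top_ty A /\ is_top_ty B
  end.

Fixpoint is_top_ctx (G : ctx) : Prop :=
  match G with
  | [] => True
  | BTy T :: G' => is_top_ty T /\ is_top_ctx G'
  | BTm T :: G' => is_top_ty T /\ is_top_ctx G'
  end.

Fixpoint is_top_tm (t : tm) : Prop :=
  match t with
  | ttop => True
  | tvar _ => True
  | tabs U u => is_top_ty U /\ is_top_tm u
  | ttabs U u => is_top_ty U /\ is_top_tm u
  | tapp r s => is_top_tm r /\ is_top_tm s
  | ttapp r U => is_top_tm r /\ is_top_ty U
  end.

Fixpoint beta_normal (t : tm) : Prop :=
  match t with
  | ttop => True
  | tvar _ => True
  | tabs _ u => beta_normal u
  | ttabs _ u => beta_normal u
  | tapp r s =>
      beta_normal r /\ beta_normal s /\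
      (match r with tabs _ _ => False | _ => True end)
  | ttapp r _ =>
      beta_normal r /\
      (match r with ttabs _ _ => False | _ => True end)
  end.

Definition is_abstraction (t : tm) : Prop :=
  match t with
  | tabs _ _ => True
  | ttabs _ _ => True
  | _ => False
  end.

(* Main.v *)
Require Import Defs.
From Stdlib Require Import List Arith Lia.
Import ListNotations.

Lemma shift_top : forall T d c, is_top_ty T -> is_top_ty (tshift d c T).
Proof.
  induction T; intros d c H; simpl in *; try tauto.
  - destruct (c <=? n); simpl; auto.
  - destruct H; split; auto.
  - destruct H; split; auto.
Qed.

Lemma shift_wf : forall T d c k, wf_ty k T -> wf_ty (k + d) (tshift d c T).
Proof.
  induction T; intros d c k H; simpl in *; auto.
  - destruct (c <=? n); simpl; lia.
  - destruct H; split; auto.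
  - destruct H; split; auto. apply (IHT2 d (S c) (S k)); auto.
  - destruct H; split; auto. apply (IHT2 d (S c) (S k)); auto.
Qed.

Lemma subst_top : forall T j U, is_top_ty T -> is_top_ty U -> is_top_ty (tsubst j U T).
Proof.
  induction T; intros j U H HU; simpl in *; try tauto.
  - destruct (n =? j). apply shift_top; auto.
    destruct (j <? n); simpl; auto.
  - destruct H; split; auto.
  - destruct H; split; auto.
Qed.

Lemma subst_wf : forall T j k U, wf_ty (S k) T -> j <= k -> wf_ty (k - j) U ->
  wf_ty k (tsubst j U T).
Proof.
  induction T; intros j k U H Hj HU; simpl in *; auto.
  - destruct (Nat.eqb_spec n j).
    + replace k with (k - j + j) by lia. apply shift_wf; auto.
    + destruct (Nat.ltb_spec j n); simpl; lia.
  - destruct H; split; auto.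
  - destruct H; split; auto. apply IHT2; auto; try lia.
  - destruct H; split; auto. apply IHT2; auto; try lia.
Qed.

Lemma get_var_ok : forall G x T, wf_ctx G -> is_top_ctx G -> get_var G x = Some T ->
  is_top_ty T /\ wf_ty (ntys G) T.
Proof.
  induction G as [|b G IH]; intros x T Hw Ht Hg; simpl in *; try discriminate.
  destruct b as [B|B]; destruct Hw as [Hw1 Hw2]; destruct Ht as [Ht1 Ht2].
  - destruct (get_var G x) eqn:E; simpl in Hg; inversion Hg; subst.
    destruct (IH x t Hw2 Ht2 E). split. apply shift_top; auto.
    rewrite <- Nat.add_1_r. apply shift_wf; auto.
  - destruct x; [inversion Hg; subst; auto | eapply IH; eauto].
Qed.

Lemma expose_ok : forall G T, wf_ctx G -> is_top_ctx G -> is_top_ty T -> wf_ty (ntys G) T ->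
  is_top_ty (expose G T) /\ wf_ty (ntys G) (expose G T).
Proof.
  induction G as [|b G IH]; intros T Hw Ht HT HwT.
  - destruct T; simpl; auto.
  - destruct T; simpl; auto.
    destruct b as [B|B]; destruct Hw as [Hw1 Hw2]; destruct Ht as [Ht1 Ht2]; simpl in *.
    + destruct n.
      * destruct (IH B Hw2 Ht2 Ht1 Hw1). split. apply shift_top; auto.
        rewrite <- Nat.add_1_r. apply shift_wf; auto.
      * destruct (IH (TVar n) Hw2 Ht2 I ltac:(simpl; lia)). split. apply shift_top; auto.
        rewrite <- Nat.add_1_r. apply shift_wf; auto.
    + apply IH; auto.
Qed.

Theorem lemma7p2 (G : ctx) (t : tm) (T : ty) :
  wf_ctx G -> wf_tm (ntys G) (nvars G) t ->
  is_top_ctx G -> is_top_tm t ->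
  beta_normal t -> ~ is_abstraction t ->
  mtype G t T ->
  is_top_ty T /\ wf_ty (ntys G) T.
Proof.
  intros Hw Hwt Ht Htt Hb Hna H. revert Hw Hwt Ht Htt Hb Hna.
  induction H; intros Hw Hwt Ht Htt Hb Hna; simpl in *.
  - eapply get_var_ok; eauto.
  - auto.
  - exfalso; auto.
  - destruct Hwt, Htt, Hb as [Hb1 [Hb2 Hb3]].
    assert (Hr : ~ is_abstraction r).
    { destruct r; simpl in *; try tauto. inversion H; subst; match goal with E : expose _ _ = _ |- _ => destruct G; simpl in E; discriminate E end. }
    destruct (IHmtype1 Hw H3 Ht H5 Hb1 Hr) as [A B].
    destruct (expose_ok G R Hw Ht A B) as [C D]. rewrite H2 in C, D. simpl in C, D.
    tauto.
  - exfalso; auto.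
  - destruct Hwt, Htt, Hb as [Hb1 Hb2].
    assert (Hr : ~ is_abstraction r).
    { destruct r; simpl in *; try tauto. inversion H; subst; match goal with E : expose _ _ = _ |- _ => destruct G; simpl in E; discriminate E end. }
    destruct (IHmtype Hw H2 Ht H4 Hb1 Hr) as [A B].
    destruct (expose_ok G R Hw Ht A B) as [C D]. rewrite H1 in C. simpl in C. tauto.
  - destruct Hwt, Htt, Hb as [Hb1 Hb2].
    assert (Hr : ~ is_abstraction r).
    { destruct r; simpl in *; try tauto. inversion H; subst; match goal with E : expose _ _ = _ |- _ => destruct G; simpl in E; discriminate E end. }
    destruct (IHmtype Hw H2 Ht H4 Hb1 Hr) as [A B].
    destruct (expose_ok G R Hw Ht A B) as [C D]. rewrite H1 in C, D. simpl in C, D.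
    unfold topen. split.
    + apply subst_top; tauto.
    + apply subst_wf; try tauto; try lia. rewrite Nat.sub_0_r; auto.
Qed.
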